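(* Let $G$ be a finite Abelian group of order $n$, $H$ its Fourier matrix (rows and columns indexed by $G$), and $A$ an $n\times n$ flat matrix with rows $(R_i)_{i\in G}$ and columns $v_1,\dots,v_n$. For $r=1,\dots,n$ let $M_r=\frac1{\sqrt n}\operatorname{diag}(v_r)H$. Then $\{M_1,\dots,M_n\}$ is a complete system of mutually unbiased Hadamards if and only if for every nonzero $\Delta\in G$ the matrix $D_\Delta$ whose rows are $R_{i+\Delta}\circ R_i^{(-1)}$, $i\in G$, has pairwise orthogonal rows.
   Context: A flat matrix is a complex matrix all of whose entries have absolute value $1$. Writing $G=\mathbb{Z}_{d_1}\times\cdots\times\mathbb{Z}_{d_m}$, the Fourier matrix is $(\chi_j(i))_{i,j\in G}$ with $\chi_a(b)=\exp(\sum_j\frac{2\pi i}{d_j}a_jb_j)$. $\circ$ is the entrywise product and $R^{(-1)}$ the entrywise inverse. A complex Hadamard matrix is a unitary $n\times n$ matrix all of whose entries have absolute value $1/\sqrt n$; two are mutually unbiased if $|\langle x|y\rangle|=1/\sqrt n$ for every column $x$ of one and column $y$ of the other ($\langle x|y\rangle=\sum_t\overline{x_t}y_t$); a complete system of mutually unbiased Hadamards is a set of $n$ pairwise mutually unbiased complex Hadamard $n\times n$ matrices. *)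

(* Defs.v *)
From HB Require Import structures.
From mathcomp Require Import all_boot all_order all_algebra all_field.
Set Implicit Arguments. Unset Strict Implicit. Unset Printing Implicit Defensive.
Import Order.TTheory GRing.Theory Num.Theory.
Local Open Scope ring_scope.

(* G = Z_{d_1} x ... x Z_{d_m} with d_j = (e j).+1 >= 1 *)
Definition Grp (m : nat) (e : 'I_m -> nat) : finType :=
  {dffun forall j : 'I_m, 'I_(e j).+1}.

Definition addG m e (x y : Grp e) : Grp e :=
  @finfun 'I_m (fun j => 'I_(e j).+1) (fun j => (x j + y j)%R).

Definition zeroG m (e : 'I_m -> nat) : Grp e :=
  @finfun 'I_m (fun j => 'I_(e j).+1) (fun j => 0%R).

(* exp(2 pi i / d): d.-root (-1) is exp(i pi / d) (minimal nonnegative argument) *)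
Definition omega (d : nat) : algC := (d.-root (-1)) ^+ 2.

(* Fourier matrix: H a b = chi_b(a) = exp(sum_j 2 pi i a_j b_j / d_j) *)
Definition fourier m (e : 'I_m -> nat) (a b : Grp e) : algC :=
  \prod_(j < m) omega (e j).+1 ^+ ((a j : nat) * (b j : nat)).

(* matrices with rows/columns indexed by a finite type, as functions *)
Definition inner (T : finType) (x y : T -> algC) : algC :=
  \sum_(t : T) (x t)^* * y t.

Definition flat (I J : finType) (A : I -> J -> algC) : Prop :=
  forall i j, `|A i j| = 1.

Definition unitary (T : finType) (M : T -> T -> algC) : Prop :=
  forall j k, inner (fun t => M t j) (fun t => M t k) = (j == k)%:R.

Definition complex_hadamard (T : finType) (M : T -> T -> algC) : Prop :=
  unitary M /\ forall i j, `|M i j| = (sqrtC (#|T|%:R))^-1.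

Definition mutually_unbiased (T : finType) (M N : T -> T -> algC) : Prop :=
  forall j k, `|inner (fun t => M t j) (fun t => N t k)| = (sqrtC (#|T|%:R))^-1.

Definition complete_MUH (T : finType) (Ms : T -> T -> T -> algC) : Prop :=
  (forall r, complex_hadamard (Ms r)) /\
  (forall r s, r != s -> mutually_unbiased (Ms r) (Ms s)).

Definition rows_pairwise_orthogonal (I J : finType) (D : I -> J -> algC) : Prop :=
  forall i i', i != i' -> inner (D i) (D i') = 0.

Definition Mr m (e : 'I_m -> nat) (A : Grp e -> Grp e -> algC) (r : Grp e)
  : Grp e -> Grp e -> algC :=
  fun i j => (sqrtC (#|Grp e|%:R))^-1 * (A i r * fourier i j).

Definition Dmat m (e : 'I_m -> nat) (A : Grp e -> Grp e -> algC) (dl : Grp e)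
  : Grp e -> Grp e -> algC :=
  fun i r => A (addG i dl) r * (A i r)^-1.

(* Main.v *)
Require Import Defs.
From HB Require Import structures.
From mathcomp Require Import all_boot all_order all_algebra all_field.
Set Implicit Arguments. Unset Strict Implicit. Unset Printing Implicit Defensive.
Import Order.TTheory GRing.Theory Num.Theory.
Local Open Scope ring_scope.

Lemma unit_conj (x : algC) : `|x| = 1 -> x^* = x^-1.
Proof. by move=> h; rewrite invC_norm h expr1n invr1 mul1r. Qed.

Lemma unit_conjM (x : algC) : `|x| = 1 -> x^* * x = 1.
Proof. move=> h; rewrite unit_conj // mulVf //; apply/eqP=> x0.
by move: h; rewrite x0 normr0 => /eqP; rewrite eq_sym oner_eq0. Qed.

Lemma norm_unity (x : algC) n : (0 < n)%N -> x ^+ n = 1 -> `|x| = 1.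
Proof.
move=> n0 h; apply/eqP; rewrite -(pexpr_eq1 n0) ?normr_ge0 //.
by rewrite -normrX h normr1.

Qed.

Lemma orth_cyc (rho : algC) g : g.-primitive_root rho ->
  forall i j : 'I_g, \sum_(k < g) (rho ^+ i / rho ^+ j) ^+ k = (i == j)%:R * g%:R.
Proof.
move=> pr i j; have g0 : (0 < g)%N := prim_order_gt0 pr.
have rg := prim_expr_order pr.
have nr : `|rho| = 1 := norm_unity g0 rg.
have rn0 : rho != 0 by apply/eqP=> r0; move: nr; rewrite r0 normr0 => /eqP; rewrite eq_sym oner_eq0.
have [->|nij] := eqVneq i j.
  rewrite divff ?expf_neq0 // mul1r.
  by rewrite (eq_bigr (fun _ => 1)) ?sumr_const ?card_ord // => k _; rewrite expr1n.
set q := rho ^+ i / rho ^+ j.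
have qg : q ^+ g = 1 by rewrite /q exprMn exprVn -!exprM mulnC exprM rg expr1n mulnC exprM rg expr1n invr1 mulr1.
have q1 : q != 1.
  rewrite /q; apply/eqP=> /(congr1 (fun z => z * rho ^+ j)); rewrite mul1r divfK ?expf_neq0 //.
  move/eqP; rewrite (eq_prim_root_expr pr) !modn_small ?ltn_ord //.
  by move/eqP/val_inj => eij; rewrite eij eqxx in nij.
rewrite mul0r; have := subrX1 q g; rewrite qg subrr => /esym/eqP.
by rewrite mulf_eq0 subr_eq0 (negbTE q1) => /eqP.

Qed.

Lemma norm1B2 (b : algC) : `|b| = 1 -> `|1 - b| ^+ 2 = 2 - 2 * 'Re b.
Proof.
move=> nb; have h2 : 2 * 'Re b = b + b^*.
  by rewrite ReE mulrC divfK // pnatr_eq0.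
rewrite h2 normCK rmorphB rmorph1.
rewrite mulrBl !mulrBr !mul1r mulr1 -normCK nb expr1n.
rewrite opprB opprD addrCA addrA addrA -addrA; congr (_ + _); last exact: addrC.


Qed.

Lemma key_term (a r : algC) (i j k : nat) : `|a| = 1 -> `|r| = 1 ->
  (a * r ^+ k) ^+ i * ((a * r ^+ k) ^+ j)^* = a ^+ i * (a ^+ j)^* * (r ^+ i / r ^+ j) ^+ k.
Proof.
move=> na nr.
rewrite (unit_conj (x := (a * r ^+ k) ^+ j)); last by rewrite normrX normrM normrX na nr expr1n mulr1 expr1n.
rewrite (unit_conj (x := a ^+ j)) ?normrX ?na ?expr1n //.
rewrite !exprMn invfM -!exprM exprVn -!exprM (mulnC k i) (mulnC k j).
by rewrite mulrACA.
Qed.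

Lemma Kroot (y : algC) g : `|y| = 1 -> y != 1 -> (1 < g)%N ->
  exists z, z ^+ g = y /\ 'Re y < 'Re z.
Proof.
move=> ny y1 g1; have g0 : (0 < g)%N := ltnW g1.
set a := g.-root y; have ag : a ^+ g = y := rootCK g0 y.
have na : `|a| = 1.
  by apply/eqP; rewrite -(pexpr_eq1 g0) ?normr_ge0 // -normrX ag ny.
have [rho pr] := C_prim_root_exists g0.
have rg := prim_expr_order pr.
have nr : `|rho| = 1 := norm_unity g0 rg.
pose b (k : 'I_g) := a * rho ^+ k.
have bg k : b k ^+ g = y by rewrite /b exprMn exprAC rg expr1n mulr1.
have nb k : `|b k| = 1 by rewrite /b normrM normrX nr expr1n mulr1.
case: (boolP [exists k : 'I_g, 'Re y < 'Re (b k)]).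
  by case/existsP=> k hk; exists (b k).
move/existsPn=> H; exfalso.
pose S (z : algC) := \sum_(i < g) z ^+ i.
have Sb k : `|S (b k)| ^+ 2 <= 1.
  have hk : 'Re (b k) <= 'Re y by rewrite real_leNgt ?Creal_Re ?H.
  have e1 : (b k - 1) * S (b k) = y - 1 by rewrite -subrX1 bg.
  have : `|1 - b k| ^+ 2 * `|S (b k)| ^+ 2 = `|1 - y| ^+ 2.
    rewrite -exprMn -normrM; congr (`|_| ^+ 2).
    by rewrite -opprB mulNr e1 opprB.
  have py : 0 < `|1 - y| ^+ 2.
    by rewrite exprn_gt0 // normr_gt0 subr_eq0 eq_sym.
  have le : `|1 - y| ^+ 2 <= `|1 - b k| ^+ 2.
    by rewrite !norm1B2 // lerD2l lerN2 ler_pM2l ?ltr0n.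
  by move=> eq; rewrite -(ler_pM2l (lt_le_trans py le)) mulr1 eq.
have : \sum_(k < g) `|S (b k)| ^+ 2 <= g%:R.
  by rewrite -[g in X in _ <= X]card_ord -sumr_const; apply: ler_sum=> k _; apply: Sb.
have -> : \sum_(k < g) `|S (b k)| ^+ 2 = (g * g)%:R.
  have nai i : a ^+ i * (a ^+ i)^* = 1 by rewrite -normCK normrX na !expr1n.
  transitivity (\sum_(i < g) \sum_(j < g)
      a ^+ i * (a ^+ j)^* * \sum_(k < g) (rho ^+ i / rho ^+ j) ^+ k).
    rewrite (eq_bigr (fun k : 'I_g => \sum_(i < g) \sum_(j < g)
      a ^+ i * (a ^+ j)^* * (rho ^+ i / rho ^+ j) ^+ k)).
      rewrite exchange_big; apply: eq_bigr => i _.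
      rewrite exchange_big; apply: eq_bigr => j _.
      by rewrite mulr_sumr.
    move=> k _; rewrite normCK /S rmorph_sum big_distrlr; apply: eq_bigr => i _.
    apply: eq_bigr => j _.
    exact: key_term.
  under eq_bigr => i _ do under eq_bigr => j _ do rewrite orth_cyc //.
  rewrite (eq_bigr (fun _ => g%:R)); first by rewrite sumr_const card_ord natrM mulr_natr.
  move=> i _; rewrite (bigD1 i) //= big1 ?addr0; first by rewrite eqxx nai !mul1r.
  by move=> j /negbTE; rewrite eq_sym => ->; rewrite !mul0r mulr0.
rewrite ler_nat => h; have := leq_pmul2l (n1:=g) (n2:=1) g0; by rewrite muln1 h => /esym; rewrite leqNgt g1.


Qed.


Lemma omega_exp d : (0 < d)%N -> omega d ^+ d = 1.
Proof. by move=> d0; rewrite /omega -exprM mulnC exprM rootCK // sqrrN expr1n. Qed.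

Lemma omega_prim d k : (0 < k)%N -> (k < d)%N -> omega d ^+ k != 1.
Proof.
move=> k0 kd; have d0 : (0 < d)%N := leq_ltn_trans (leq0n k) kd.
have d1 : (1 < d)%N := leq_ltn_trans k0 kd.
pose y := d.-root (-1 : algC); have yd : y ^+ d = -1 := rootCK d0 _.
have m1 : (-1 : algC) != 1.
  apply/eqP => h; have := congr1 (fun x => x + 1) h; rewrite addNr -mulr2n => /eqP.
  by rewrite eq_sym pnatr_eq0.
apply/negP; rewrite /omega -/y -exprM => /eqP H.
have k2 : (0 < 2 * k)%N by rewrite muln_gt0.
have [m pm mdiv] := prim_order_exists k2 H.
have m0 : (0 < m)%N := prim_order_gt0 pm.
have y2d : y ^+ (2 * d) = 1 by rewrite mulnC exprM yd sqrrN expr1n.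
have mnd : ~~ (m %| d)%N by rewrite (prim_order_dvd pm) yd.
have m2d : (m %| 2 * d)%N by rewrite (prim_order_dvd pm) y2d.
have mev : ~~ odd m.
  apply/negP=> om; move: m2d; rewrite Gauss_dvdr ?(negbTE mnd) //.
  by rewrite coprimen2 om.
set d' := (m %/ 2)%N.
have md' : m = (d' * 2)%N by rewrite divnK // dvdn2.
have d'0 : (0 < d')%N by move: m0; rewrite md' muln_gt0 andbT.
have d'd : (d' %| d)%N.
  by move: m2d; rewrite md' mulnC dvdn_pmul2l.
have d'ltd : (d' < d)%N.
  have := dvdn_leq k2 mdiv; rewrite md' mulnC leq_pmul2l // => h.
  exact: leq_ltn_trans h kd.
have yd' : y ^+ d' = -1.
  have : (y ^+ d') ^+ 2 = 1 by rewrite -exprM -md' (prim_expr_order pm).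
  move/eqP; rewrite sqrf_eq1 => /orP[/eqP h|/eqP //].
  have : (m %| d')%N by rewrite (prim_order_dvd pm) h.
  move/(dvdn_leq d'0); rewrite md' -{2}[d']muln1 leq_pmul2l //.
set g := (d %/ d')%N.
have dg : d = (g * d')%N by rewrite divnK.
have g1 : (1 < g)%N by move: d'ltd; rewrite dg -{1}[d']mul1n ltn_pmul2r.
have ny : `|y| = 1 by apply: (norm_unity _ y2d); rewrite muln_gt0 d0.
have y1 : y != 1 by apply/eqP=> y1; move: m1; rewrite -yd y1 expr1n eqxx.
have [z [zg Rz]] := Kroot ny y1 g1.
have zd : z ^+ d = -1 by rewrite dg exprM zg yd'.
have [h|h] := real_ge0P (Creal_Im z).
  by have := rootC_Re_max d0 zd h; rewrite -/y => /(lt_le_trans Rz); rewrite ltxx.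
have zd' : z^* ^+ d = -1 by rewrite -rmorphXn zd rmorphN1.
have h' : 0 <= 'Im (z^*) by rewrite Im_conj oppr_ge0 ltW.
by have := rootC_Re_max d0 zd' h'; rewrite -/y Re_conj => /(lt_le_trans Rz); rewrite ltxx.
Qed.

Lemma omega_norm d : (0 < d)%N -> `|omega d| = 1.
Proof. by move=> d0; apply: (norm_unity d0); apply: omega_exp. Qed.

Lemma omega_inj d x y : (x < d)%N -> (y < d)%N -> omega d ^+ x = omega d ^+ y -> x = y.
Proof.
move=> xd yd.
have d0 : (0 < d)%N := leq_ltn_trans (leq0n x) xd.
have nz : omega d != 0 by apply/eqP=> h; have := omega_norm d0; rewrite h normr0 => /eqP; rewrite eq_sym oner_eq0.
wlog xy : x y xd yd / (x <= y)%N.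
  move=> W; case: (leqP x y) => [h|h]; first exact: W.
  by move=> /esym E; apply/esym/W => //; apply: ltnW.
move=> E; apply/eqP; rewrite eqn_leq xy /=; rewrite leqNgt; apply/negP => lt.
have : omega d ^+ (y - x) = 1.
  apply: (mulfI (expf_neq0 x nz)); by rewrite mulr1 -exprD subnKC ?(ltnW lt).
apply/eqP; apply: omega_prim; first by rewrite subn_gt0.
exact: leq_ltn_trans (leq_subr _ _) yd.
Qed.

Section Grp.
Variables (m : nat) (e : 'I_m -> nat).
Local Notation G := (Grp e).

Lemma addGE (x y : G) j : addG x y j = (x j + y j)%R.
Proof. by rewrite /addG ffunE. Qed.

Lemma zeroGE j : zeroG e j = 0%R.
Proof. by rewrite /zeroG ffunE. Qed.

Lemma addG_inj (u : G) : injective (fun t => addG t u).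
Proof.
move=> t t' /= E; apply/ffunP => j.
by have := congr1 (fun f : G => f j) E; rewrite /= !addGE => /addIr.
Qed.

Lemma fourier_add (a b c : G) : fourier (addG a b) c = fourier a c * fourier b c.
Proof.
rewrite /fourier -big_split /=; apply: eq_bigr => j _; rewrite addGE -exprD -mulnDl.
rewrite -[LHS](expr_mod _ (omega_exp (ltn0Sn (e j)))).
rewrite -[RHS](expr_mod _ (omega_exp (ltn0Sn (e j)))).
by rewrite /= modnMml.
Qed.

Lemma fourier_sym (a b : G) : fourier a b = fourier b a.
Proof. by rewrite /fourier; apply: eq_bigr => j _; rewrite mulnC. Qed.

Lemma fourier0 (t : G) : fourier t (zeroG e) = 1.
Proof. by rewrite /fourier big1 // => j _; rewrite zeroGE muln0 expr0. Qed.

Lemma fourier_norm (a b : G) : `|fourier a b| = 1.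
Proof.
rewrite /fourier; elim/big_rec: _ => [|j x _ IH]; first by rewrite normr1.
by rewrite normrM IH normrX omega_norm // expr1n mulr1.
Qed.

Lemma fourier_conjM (a b : G) : (fourier a b)^* * fourier a b = 1.
Proof. exact/unit_conjM/fourier_norm. Qed.

Lemma orthG (a b : G) :
  \sum_t (fourier t a)^* * fourier t b = (a == b)%:R * #|G|%:R.
Proof.
have [<-|nab] := eqVneq a b.
  rewrite mul1r (eq_bigr (fun _ => 1)) ?sumr_const // => t _.
  exact: fourier_conjM.
rewrite mul0r.
have [j hj] : exists j, a j != b j.
  apply/existsP; apply: contraR nab => /existsPn H; apply/eqP/ffunP => j.
  by apply/eqP; move: (H j); rewrite negbK.
have ej : (0 < e j)%N.
  rewrite lt0n; apply/negP => /eqP E0; move: hj; rewrite -(inj_eq val_inj) /=.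
  move: (ltn_ord (a j)) (ltn_ord (b j)); move: (nat_of_ord (a j)) (nat_of_ord (b j)) => x y.
  by rewrite E0 !ltnS !leqn0 => /eqP -> /eqP ->.
pose u : G := @finfun _ (fun i => 'I_(e i).+1) (fun i => if i == j then inord 1 else 0%R).
have fu c : fourier u c = omega (e j).+1 ^+ c j.
  rewrite /fourier (bigD1 j) //= big1 ?mulr1.
    by rewrite ffunE eqxx inordK ?mul1n.
  by move=> i /negbTE nij; rewrite ffunE nij mul0n expr0.
set S := (X in X = 0).
have ES : S = (fourier u a)^* * fourier u b * S.
  rewrite {1}/S (reindex_inj (addG_inj (u:=u))) /= /S mulr_sumr; apply: eq_bigr => t _.
  rewrite !fourier_add rmorphM.
  by rewrite mulrACA mulrC.
have q1 : (fourier u a)^* * fourier u b != 1.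
  apply/eqP => E; move: hj; rewrite -(inj_eq val_inj) /=; apply/negP; apply/negPn/eqP.
  apply: (@omega_inj (e j).+1) => //; rewrite -!fu.
  have := congr1 (fun z => fourier u a * z) E.
  by rewrite mulr1 mulrA -[fourier u a * _]mulrC fourier_conjM mul1r => ->.
apply/eqP; move: ES => /eqP; rewrite -subr_eq0 -{1}[S]mul1r -mulrBl mulf_eq0.
by rewrite subr_eq0 eq_sym (negbTE q1).
Qed.

Lemma addGC (x y : G) : addG x y = addG y x.
Proof. by apply/ffunP => j; rewrite !addGE addrC. Qed.

Lemma ncard_gt0 : (0 < #|G|)%N.
Proof. by apply/card_gt0P; exists (zeroG e). Qed.

Section W.
Variable w : G -> algC.
Hypothesis hw : forall t, `|w t| = 1.

Definition Xw (j k : G) := \sum_t w t * (fourier t j)^* * fourier t k.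
Definition Cw (dl : G) := \sum_t (w t)^* * w (addG t dl).

Lemma normXw j k : (Xw j k)^* * Xw j k = \sum_dl (fourier dl j)^* * fourier dl k * Cw dl.
Proof.
rewrite /Xw rmorph_sum mulr_suml.
under eq_bigr => t _ do rewrite mulr_sumr (reindex_inj (addG_inj (u:=t))) /=.
rewrite exchange_big; apply: eq_bigr => dl _; rewrite /Cw mulr_sumr; apply: eq_bigr => t _.
rewrite (addGC dl t) !fourier_add !rmorphM /=.
have h1 := fourier_conjM t j; have h2 := fourier_conjM t k.
set a1 := fourier t j; set a2 := fourier t k; set b1 := fourier dl j; set b2 := fourier dl k.
set c1 := w t; set c2 := w (addG t dl).
rewrite conjCK [LHS](AC ((2*1)*((1*2)*2)) (((2*5)*(3*7))*((6*8)*(1*4)))).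
by rewrite /= [a1 * _]mulrC h1 h2 !mul1r.
Qed.

Lemma addG0 (t : G) : addG t (zeroG e) = t.
Proof. by apply/ffunP => j; rewrite addGE zeroGE addr0. Qed.

Lemma fourier0l (t : G) : fourier (zeroG e) t = 1.
Proof. by rewrite fourier_sym fourier0. Qed.

Lemma Cw0 : Cw (zeroG e) = #|G|%:R.
Proof.
rewrite /Cw (eq_bigr (fun _ => 1)) ?sumr_const // => t _.
by rewrite addG0 unit_conjM.
Qed.

Lemma nR_neq0 : (#|G|%:R : algC) != 0.
Proof. by rewrite pnatr_eq0 -lt0n ncard_gt0. Qed.

Lemma normX2 j k : (Xw j k)^* * Xw j k = `|Xw j k| ^+ 2.
Proof. by rewrite normCK mulrC. Qed.

Lemma PQ : (forall j k, `|Xw j k| = sqrtC (#|G|%:R)) <->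
           (forall dl, dl != zeroG e -> Cw dl = 0).
Proof.
split.
  move=> H dl0 ndl0.
  have Hk k : \sum_dl fourier dl k * Cw dl = #|G|%:R.
    have := normXw (zeroG e) k; rewrite normX2 H sqrtCK => ->.
    by apply: eq_bigr => dl _; rewrite fourier0 rmorph1 mul1r.
  have E : \sum_dl Cw dl * \sum_k (fourier k dl0)^* * fourier k dl = 0.
    rewrite (eq_bigr (fun dl => \sum_k (fourier k dl0)^* * (fourier dl k * Cw dl))); last first.
      by move=> dl _; rewrite mulrC mulr_suml; apply: eq_bigr => k _; rewrite (fourier_sym k dl) mulrA.
    rewrite exchange_big /=.
    under eq_bigr => k _ do rewrite -mulr_sumr Hk.
    rewrite -mulr_suml.
    have -> : \sum_k (fourier k dl0)^* = \sum_k (fourier k dl0)^* * fourier k (zeroG e).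
      by apply: eq_bigr => k _; rewrite fourier0 mulr1.
    by rewrite orthG (negbTE ndl0) !mul0r.
  move: E; rewrite (bigD1 dl0) //= orthG eqxx mul1r [X in _ + X]big1 ?addr0.
    by move/eqP; rewrite mulf_eq0 (negbTE nR_neq0) orbF => /eqP.
  by move=> dl ndl; rewrite orthG eq_sym (negbTE ndl) mul0r mulr0.
move=> H j k.
have : `|Xw j k| ^+ 2 = #|G|%:R.
  rewrite -normX2 normXw (bigD1 (zeroG e)) //= big1 ?addr0.
    by rewrite !fourier0l rmorph1 !mul1r Cw0.
  by move=> dl ndl; rewrite H // mulr0.
by move=> <-; rewrite exprCK.
Qed.

End W.

End Grp.

Lemma sum_enum (T : finType) (F : T -> algC) :
  \sum_(l < #|T|) F (enum_val l) = \sum_t F t.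
Proof.
symmetry; apply: reindex; exists enum_rank => x _; [exact: enum_valK | exact: enum_rankK].
Qed.

Lemma rows_from_cols (T : finType) (D : T -> T -> algC) :
  (forall i r, `|D i r| = 1) ->
  (forall r s, r != s -> \sum_i (D i r)^* * D i s = 0) ->
  rows_pairwise_orthogonal D.
Proof.
move=> nD H i i' nii.
have k0 : (#|T|%:R : algC) != 0.
  by rewrite pnatr_eq0 -lt0n; apply/card_gt0P; exists i.
pose N : 'M[algC]_#|T| := \matrix_(p, q) D (enum_val p) (enum_val q).
pose Ni : 'M[algC]_#|T| := \matrix_(p, q) ((#|T|%:R)^-1 * (D (enum_val q) (enum_val p))^*).
have cols r s : \sum_i (D i r)^* * D i s = (r == s)%:R * #|T|%:R.
  have [<-|rs] := eqVneq r s; last by rewrite H // mul0r.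
  by rewrite mul1r (eq_bigr (fun _ => 1)) ?sumr_const // => x _; apply: unit_conjM.
have E1 : Ni *m N = 1%:M.
  apply/matrixP => p q; rewrite !mxE.
  under eq_bigr => l _ do rewrite !mxE -mulrA.
  rewrite -mulr_sumr (sum_enum (fun t => (D t (enum_val p))^* * D t (enum_val q))) cols.
  rewrite (inj_eq enum_val_inj) mulrCA mulVf // mulr1.
  by case: (p == q).
have E2 := mulmx1C E1.
apply/eqP; rewrite -conjC_eq0 /inner.
have := congr1 (fun M : 'M[algC]_#|T| => M (enum_rank i) (enum_rank i')) E2.
rewrite !mxE (inj_eq enum_rank_inj) (negbTE nii) /=.
under eq_bigr => l _ do rewrite !mxE mulrCA.
rewrite -mulr_sumr => /eqP; rewrite mulf_eq0 invr_eq0 (negbTE k0) /=.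
rewrite !enum_rankK (sum_enum (fun t => D i t * (D i' t)^*)) => h.
rewrite rmorph_sum; under eq_bigr => t _ do rewrite rmorphM /= (conjCK (D i t)).
exact: h.
Qed.

Section Main.
Variables (m : nat) (e : 'I_m -> nat) (A : Grp e -> Grp e -> algC).
Hypothesis hA : flat A.
Local Notation G := (Grp e).
Local Notation nR := (#|G|%:R : algC).
Local Notation sn := (sqrtC (#|G|%:R : algC)).

Definition wrs (r s : G) (t : G) := (A t r)^* * A t s.

Lemma wrs_norm r s t : `|wrs r s t| = 1.
Proof. by rewrite /wrs normrM norm_conjC !hA mulr1. Qed.

Lemma sn_ge0 : 0 <= sn.
Proof. by rewrite sqrtC_ge0 ler0n. Qed.

Lemma snV_conj (k : nat) : ((sqrtC (k%:R : algC))^-1)^* = (sqrtC (k%:R : algC))^-1.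
Proof. by rewrite geC0_conj // invr_ge0 sqrtC_ge0 ler0n. Qed.

Lemma snVV (k : nat) : (sqrtC (k%:R : algC))^-1 * (sqrtC (k%:R : algC))^-1 = (k%:R)^-1.
Proof. by rewrite -invfM -expr2 sqrtCK. Qed.

Lemma inner_M r s j k :
  inner (fun t => Mr A r t j) (fun t => Mr A s t k) = nR^-1 * Xw (wrs r s) j k.
Proof.
rewrite /inner /Xw mulr_sumr; apply: eq_bigr => t _.
rewrite /Mr !rmorphM /= snV_conj /wrs -snVV.
by rewrite [LHS](AC ((1*(1*1))*(1*(1*1))) ((1*4)*(((2*5)*3)*6))) /=.
Qed.

Lemma had r : complex_hadamard (Mr A r).
Proof.
split.
  move=> j k; rewrite inner_M /Xw.
  rewrite (eq_bigr (fun t => (fourier t j)^* * fourier t k)).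
    by rewrite orthG mulrCA mulVf ?nR_neq0 ?mulr1.
  by move=> t _; rewrite /wrs unit_conjM ?hA // mul1r.
move=> i j; rewrite /Mr !normrM fourier_norm hA !mulr1.
by rewrite ger0_norm // invr_ge0 sn_ge0.
Qed.

Lemma MU_iff r s : mutually_unbiased (Mr A r) (Mr A s) <->
  (forall j k, `|Xw (wrs r s) j k| = sn).
Proof.
have sn0 : sn != 0 by rewrite sqrtC_eq0 nR_neq0.
have key x : (nR^-1 * x = sn^-1) <-> (x = sn).
  split=> [h|->]; last by rewrite -snVV -mulrA mulVf // mulr1.
  have h0 : sn^-1 * (sn^-1 * x) = sn^-1 * 1 by rewrite mulr1 mulrA snVV.
  have h1 := mulfI (invr_neq0 sn0) h0.
  by apply: (mulfI (invr_neq0 sn0)); rewrite h1 mulVf.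
split=> H j k.
  apply/key; have := H j k; rewrite inner_M normrM ger0_norm //.
  by rewrite invr_ge0 ler0n.
by rewrite inner_M normrM ger0_norm ?invr_ge0 ?ler0n //; apply/key; apply: H.
Qed.

Lemma Cw_D r s dl : Cw (wrs r s) dl = \sum_t (Dmat A dl t r)^* * Dmat A dl t s.
Proof.
apply: eq_bigr => t _; rewrite /wrs /Dmat !rmorphM /= -!(unit_conj (hA _ _)) !conjCK.
by rewrite [LHS](AC ((1*1)*(1*1)) ((3*1)*(4*2))) /=.
Qed.

Lemma Dnorm dl i r : `|Dmat A dl i r| = 1.
Proof. by rewrite /Dmat normrM normfV !hA invr1 mulr1. Qed.

End Main.

Theorem mainTheorem13 (m : nat) (e : 'I_m -> nat)
  (A : Grp e -> Grp e -> algC) (hA : flat A) :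
  complete_MUH (fun r => Mr A r) <->
  (forall dl : Grp e, dl != zeroG e -> rows_pairwise_orthogonal (Dmat A dl)).
Proof.
split.
  case=> _ HMU dl ndl; apply: rows_from_cols; first exact: Dnorm hA dl.
  move=> r s rs; rewrite -Cw_D //; apply: ((PQ (wrs_norm hA r s)).1 _ dl ndl).
  by apply/MU_iff => //; apply: HMU.
move=> H; split; first exact: had.
move=> r s rs; apply/MU_iff => //; apply: ((PQ (wrs_norm hA r s)).2) => dl ndl.
rewrite Cw_D //.
have := @rows_from_cols _ (fun i r => Dmat A dl r i) (fun i r => Dnorm hA dl r i).
move=> h; apply: h => //.
by move=> r' s' rs'; apply: (H dl ndl).
Qed.
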